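(* The free $\Gamma(Lev)$-algebra on one generator, $\Gamma(Lev,\mathbb F x)=\bigoplus_{n\ge1}(Lev(n)\otimes(\mathbb F x)^{\otimes n})^{\Sigma_n}$, is isomorphic as an $\mathbb F$-vector space to $\mathbb F[\mathrm{BHS}]$, the vector space spanned by the set of binary Huffman sequences.
   Context: $[n]=\{1,\dots,n\}$. $Lev$ is the linear operad spanned by the set operad $\mathscr L'$, where $\mathscr L'(n)$ ($n\ge1$) is the set of maps $h:[n]\to\mathbb N$ with $\sum_i2^{-h(i)}=1$, $\sigma\cdot h=h\circ\sigma^{-1}$, unit $1\mapsto0$ in $\mathscr L'(1)$, composition $\mu(h\otimes g_1\otimes\dots\otimes g_n)$ sending $m_1+\dots+m_{j-1}+t$ ($1\le t\le m_j$) to $h(j)+g_j(t)$; $Lev(0)=0$. $\Gamma(Lev)$ is Fresse's divided power monad $V\mapsto\bigoplus_n(Lev(n)\otimes V^{\otimes n})^{\Sigma_n}$, so $\Gamma(Lev,\mathbb F x)$ is the free $\Gamma(Lev)$-algebra on a one-dimensional space $\mathbb F x$. $\mathrm{BHS}=\bigsqcup_{n\ge1}\{u\in\mathbb N^{\mathbb N}:\sum_iu(i)=n,\ \sum_iu(i)/2^i=1\}$. *)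

(* Defs.v *)
(* with mathcomp-finmap and multinomials' monalg
   ({malg F[K]} = the F-vector space with basis K, i.e. finitely supported
   functions K -> F). *)
From HB Require Import structures.
From mathcomp Require Import all_boot all_order all_algebra all_fingroup.
From mathcomp Require Import finmap.
From mathcomp.multinomials Require Import monalg.

Set Implicit Arguments.
Unset Strict Implicit.
Unset Printing Implicit Defensive.

Import GRing.Theory.
Local Open Scope ring_scope.

(* [n] = {1..n} is modelled by 'I_n.                                        *)
Definition lprime (n : nat) (h : {ffun 'I_n -> nat}) : bool :=
  (\sum_(i < n) ((2 ^ h i)%N%:R)^-1 == 1 :> rat).

(* Basis of V = F x : a one-element set (unit), the basis vector being x.   *)
(* Basis of the graded piece  Lev(n) (x) V^{(x) n} inside the span of all    *)
(* pairs (h, t), h : [n] -> N, t : [n] -> {x}; the tensor product of spans  *)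
(* of sets is the span of the product set, and V^{(x) n} has basis          *)
(* {x}^n = {x (x) ... (x) x}.  The direct sum over n is the span of the     *)
(* disjoint union (tagged by n).                                            *)
Definition GBasis : choiceType :=
  {n : nat & ({ffun 'I_n -> nat} * {ffun 'I_n -> unit})%type}.

(* We let a family (s m : 'S_m)_m act, s m acting on the degree-m summand.  *)
Definition actB (s : forall m, 'S_m) (k : GBasis) : GBasis :=
  let: existT m hk := k in
  existT _ m ([ffun i => hk.1 (((s m)^-1)%g i)], [ffun i => hk.2 (((s m)^-1)%g i)]).

Definition actV (F : fieldType) (s : forall m, 'S_m) (p : {malg F[GBasis]})
  : {malg F[GBasis]} :=
  \sum_(k <- msupp p) << p@_k *g actB s k >>.

(* Gamma(Lev, F x) = (+)_{n>=1} (Lev(n) (x) (F x)^{(x) n})^{Sigma_n}: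
   elements lying in the span of L'(n) (x) {x}^n in each degree (Lev(0)=0
   automatically, as L'(0) is empty) and invariant under the symmetric
   group actions. *)
Definition GammaLev (F : fieldType) (p : {malg F[GBasis]}) : Prop :=
  (forall k, k \in msupp p -> lprime (tagged k).1) /\
  (forall s : forall m, 'S_m, actV s p = p).

(* Binary Huffman sequences: disjoint union over n >= 1 of the sets of    *)
(* u : N -> N with sum_i u(i) = n and sum_i u(i)/2^i = 1.  Such u has      *)
(* finite support, so we model it as a finitely supported function.        *)
Definition bhs_cond (n : nat) (u : {fsfun nat -> nat with 0%N}) : bool :=
  [&& (0 < n)%N,
      (\sum_(i <- finsupp u) u i)%N == n &
      (\sum_(i <- finsupp u) ((u i)%:R / (2 ^ i)%N%:R) == 1 :> rat)].

Definition BHS : choiceType :=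
  {n : nat & {u : {fsfun nat -> nat with 0%N} | bhs_cond n u}}.

(* Main.v *)
Require Import Defs.
From HB Require Import structures.
From mathcomp Require Import all_boot all_order all_algebra all_fingroup.
From mathcomp Require Import finmap.
From mathcomp.multinomials Require Import monalg.
Set Implicit Arguments.
Unset Strict Implicit.
Unset Printing Implicit Defensive.
Import GRing.Theory.
Local Open Scope ring_scope.

Definition cnt n (h : {ffun 'I_n -> nat}) : {fsfun nat -> nat with 0%N} :=
  [fsfun i in seq_fset tt (codom h) => count_mem i (codom h)].

Lemma cntE n (h : {ffun 'I_n -> nat}) i : cnt h i = count_mem i (codom h).
Proof.
rewrite /cnt fsfunE.
case: ifP => [//|/negbT H]; apply/esym/count_memPn.
by rewrite seq_fsetE in H.
Qed.

Lemma fs_cnt n (h : {ffun 'I_n -> nat}) : perm_eq (finsupp (cnt h)) (undup (codom h)).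
Proof.
apply: uniq_perm; [exact: fset_uniq | exact: undup_uniq|].
move=> i; rewrite mem_finsupp cntE mem_undup.
by apply/idP/idP => [|Hi]; [apply: contraR => /count_memPn -> | apply/eqP => /count_memPn; rewrite Hi].
Qed.

Lemma regroup_rat (T : eqType) (s : seq T) (G : T -> rat) :
  \sum_(x <- s) G x = \sum_(i <- undup s) G i *+ count_mem i s.
Proof.
rewrite -big_undup_iterop_count; apply: eq_bigr => i _.
by rewrite Monoid.iteropE iter_addr_0.
Qed.

Lemma regroup_nat (T : eqType) (s : seq T) :
  (\sum_(i <- undup s) count_mem i s)%N = size s.
Proof.
rewrite -sum1_size -[in RHS]big_undup_iterop_count; apply: eq_bigr => i _.
by rewrite Monoid.iteropE iter_addn_0 mul1n.
Qed.

Lemma sum_ord_codom n (h : {ffun 'I_n -> nat}) (G : nat -> rat) :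
  \sum_(i < n) G (h i) = \sum_(x <- codom h) G x.
Proof. by rewrite codomE big_map big_enum. Qed.

Lemma bhs_cnt n (h : {ffun 'I_n -> nat}) : bhs_cond n (cnt h) = lprime h.
Proof.
rewrite /bhs_cond /lprime.
case: n h => [|n] h.
  by rewrite big_ord0 /= eq_sym oner_eq0.
rewrite (perm_big _ (fs_cnt h)) /=.
under eq_bigr do rewrite cntE.
rewrite regroup_nat size_codom card_ord eqxx /=.
rewrite (perm_big _ (fs_cnt h)) /= (sum_ord_codom h (fun x => ((2 ^ x)%N%:R)^-1)) [in RHS]regroup_rat.
congr (_ == _); apply: eq_bigr => i _.
by rewrite cntE mulr_natl.
Qed.

Definition seqOf (u : {fsfun nat -> nat with 0%N}) : seq nat :=
  flatten [seq nseq (u i) i | i <- finsupp u].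

Lemma count_seqOf u j : count_mem j (seqOf u) = u j.
Proof.
rewrite /seqOf count_flatten -map_comp sumnE big_map /=.
under eq_bigr do rewrite count_nseq /=.
case: (finsuppP u j) => [Hj|Hj].
  rewrite big1_seq // => i /andP [_ Hi].
  by case: eqP => [Eij|//]; rewrite -Eij Hi in Hj.
rewrite (bigD1_seq j) //= ?fset_uniq // eqxx mul1n big1 ?addn0 // => i Hij.
by rewrite (negPf Hij).
Qed.

Lemma size_seqOf u : size (seqOf u) = (\sum_(i <- finsupp u) u i)%N.
Proof.
rewrite /seqOf size_flatten /shape -map_comp sumnE big_map.
by apply: eq_bigr => i _; rewrite /= size_nseq.
Qed.

Lemma codom_nth n (s : seq nat) : size s = n ->
  codom [ffun i : 'I_n => nth 0%N s i] = s.
Proof.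
move=> Hs; rewrite codomE.
have -> : map [ffun i : 'I_n => nth 0%N s i] (enum 'I_n) = map (nth 0%N s \o val) (enum 'I_n).
  by apply: eq_map => i; rewrite ffunE.
by rewrite map_comp val_enum_ord -Hs -/(mkseq _ _) mkseq_nth.
Qed.

Definition BT (n : nat) := {u : {fsfun nat -> nat with 0%N} | bhs_cond n u}.

Definition hcB (b : BHS) : {ffun 'I_(tag b) -> nat} :=
  [ffun i : 'I_(tag b) => nth 0%N (seqOf (val (tagged b))) i].

Definition cB (b : BHS) : GBasis :=
  existT _ (tag b) (hcB b, [ffun=> tt]).

Definition bhsOf (k : GBasis) : option BHS :=
  omap (fun x : BT (tag k) => existT BT (tag k) x) (insub (cnt (tagged k).1)).

Lemma codom_hcB b : codom (hcB b) = seqOf (val (tagged b)).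
Proof.
apply: codom_nth; rewrite size_seqOf.
by case: b => n [u /= /and3P [_ /eqP -> _]].
Qed.

Lemma cnt_hcB b : cnt (hcB b) = val (tagged b).
Proof. by apply/fsfunP => j; rewrite cntE codom_hcB count_seqOf. Qed.

Lemma bhsOf_cB b : bhsOf (cB b) = Some b.
Proof.
rewrite /bhsOf /cB /=  cnt_hcB.
case: b => n [u Hu] /=.
by rewrite insubT.
Qed.

Lemma codom_tuple n (h : {ffun 'I_n -> nat}) : codom h = [tuple h i | i < n].
Proof. by rewrite codomE /=. Qed.

Lemma perm_codom n (h : {ffun 'I_n -> nat}) (s : 'S_n) :
  perm_eq (codom [ffun i => h (s i)]) (codom h).
Proof.
rewrite [codom h]codom_tuple; apply/tuple_permP; exists s.
rewrite codomE /=; apply: eq_map => i; by rewrite ffunE tnth_mktuple.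
Qed.

Lemma perm_ex n (h h' : {ffun 'I_n -> nat}) :
  perm_eq (codom h) (codom h') -> exists s : 'S_n, h = [ffun i => h' (s i)].
Proof.
rewrite [codom h']codom_tuple => /tuple_permP [s Hs]; exists s.
have H2 : map h (enum 'I_n) = map (fun i => h' (s i)) (enum 'I_n).
  rewrite -codomE Hs /=; apply: eq_map => i; by rewrite tnth_mktuple.
apply/ffunP => i; rewrite ffunE.
by have /eq_in_map := H2; apply; rewrite mem_enum.
Qed.

Lemma cnt_perm n (h h' : {ffun 'I_n -> nat}) :
  perm_eq (codom h) (codom h') -> cnt h = cnt h'.
Proof. by move/seq.permP => H; apply/fsfunP => j; rewrite !cntE H. Qed.

Lemma perm_cnt n (h h' : {ffun 'I_n -> nat}) :
  cnt h = cnt h' -> perm_eq (codom h) (codom h').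
Proof.
move=> E; rewrite /perm_eq; apply/allP => x _ /=; apply/eqP.
by rewrite -!cntE E.
Qed.

Definition fam n (s : 'S_n) : forall m, 'S_m :=
  fun m => if n =P m is ReflectT e then cast_perm e s else 1%g.

Lemma fam_self n (s : 'S_n) : fam s n = s.
Proof.
rewrite /fam; case: eqP => // e.
by rewrite (eq_irrelevance e erefl) cast_perm_id.
Qed.

Lemma actB_fam n (s : 'S_n) h t :
  actB (fam s) (existT _ n (h, t)) =
  existT _ n ([ffun i => h ((s^-1)%g i)], [ffun i => t ((s^-1)%g i)]).
Proof.
by rewrite /actB fam_self.
Qed.

Lemma orbit_rep (k : GBasis) : lprime (tagged k).1 ->
  exists b (s : forall m, 'S_m), k = actB s (cB b).
Proof.
case: k => n [h t] /= Hl.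
have Hb : bhs_cond n (cnt h) by rewrite bhs_cnt.
pose b : BHS := existT BT n (exist _ (cnt h) Hb).
have E : cnt (hcB b) = cnt h by rewrite cnt_hcB.
have [s Hs] := perm_ex (perm_cnt (esym E)).
exists b, (fam (s^-1)%g); rewrite /cB /= fam_self invgK.
congr existT; congr pair; apply/ffunP => i; rewrite ?Hs !ffunE //.
by case: (t i).
Qed.

Definition sinv (s : forall m, 'S_m) : forall m, 'S_m := fun m => ((s m)^-1)%g.

Lemma actBK s k : actB (sinv s) (actB s k) = k.
Proof.
case: k => m [h t] /=; congr existT; congr pair; apply/ffunP => i;
by rewrite !ffunE /sinv invgK permK.
Qed.

Lemma actBKV s k : actB s (actB (sinv s) k) = k.
Proof.
case: k => m [h t] /=; congr existT; congr pair; apply/ffunP => i;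
by rewrite !ffunE /sinv invgK permKV.
Qed.

Lemma actBII s k : actB (sinv (sinv s)) k = actB s k.
Proof.
case: k => m [h t] /=; congr existT; congr pair; apply/ffunP => i;
by rewrite !ffunE /sinv invgK.
Qed.

Lemma mcoef_sumE (F : fieldType) (K : choiceType) (p : {malg F[K]}) k :
  \sum_(k0 <- msupp p) p@_k0 *+ (k0 == k) = p@_k.
Proof.
rewrite [in RHS](monalgE p) raddf_sum /=.
by apply: eq_bigr => k0 _; rewrite mcoeffU.
Qed.

Lemma actV_coef (F : fieldType) s (p : {malg F[GBasis]}) k :
  (actV s p)@_k = p@_(actB (sinv s) k).
Proof.
rewrite /actV raddf_sum /= -mcoef_sumE; apply: eq_bigr => k0 _.
rewrite mcoeffU; congr (_ *+ nat_of_bool _).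
apply/eqP/eqP => [<-|->]; by rewrite ?actBK ?actBKV.
Qed.

Lemma inv_coef (F : fieldType) (p : {malg F[GBasis]}) :
  (forall s, actV s p = p) -> forall s k, p@_(actB s k) = p@_k.
Proof.
move=> H s k; have /malgP/(_ k) := H (sinv s).
by rewrite actV_coef actBII.
Qed.

Lemma coef_inv (F : fieldType) (p : {malg F[GBasis]}) :
  (forall s k, p@_(actB s k) = p@_k) -> forall s, actV s p = p.
Proof. by move=> H s; apply/malgP => k; rewrite actV_coef H. Qed.

Definition Gv (F : fieldType) (k : GBasis) : {malg F[BHS]} :=
  if bhsOf k is Some b then (if cB b == k then << b >> else 0) else 0.

Lemma GvE (F : fieldType) k b : (Gv F k)@_b = (k == cB b)%:R.
Proof.
rewrite /Gv; case: (eqVneq k (cB b)) => [->|Hk].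
  by rewrite bhsOf_cB eqxx mcoeffU eqxx.
case E: (bhsOf k) => [b'|]; last by rewrite mcoeff0.
case: eqP => [Ec|_]; last by rewrite mcoeff0.
rewrite mcoeffU; case: eqP => // Eb.
by rewrite -Ec Eb eqxx in Hk.
Qed.

Definition fmap (F : fieldType) (p : {malg F[GBasis]}) : {malg F[BHS]} :=
  \sum_(k <- msupp p) p@_k *: Gv F k.

Lemma fmapE (F : fieldType) p b : (fmap p)@_b = p@_(cB b) :> F.
Proof.
rewrite /fmap raddf_sum /= -(mcoef_sumE p (cB b)); apply: eq_bigr => k _.
by rewrite mcoeffZ GvE mulr_natr.
Qed.

Lemma fmap_linear (F : fieldType) : linear (@fmap F).
Proof.
move=> a x y; apply/malgP => b.
by rewrite mcoeffD mcoeffZ !fmapE mcoeffD mcoeffZ.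
Qed.

HB.instance Definition _ (F : fieldType) :=
  GRing.isLinear.Build F {malg F[GBasis]} {malg F[BHS]} _ (@fmap F) (@fmap_linear F).

Definition Lst (b : BHS) : seq GBasis :=
  undup [seq existT (fun n => ({ffun 'I_n -> nat} * {ffun 'I_n -> unit})%type) (tag b)
           ([ffun i => hcB b (s i)], [ffun=> tt]) | s : 'S_(tag b) <- enum 'S_(tag b)].

Lemma memLst b k : (k \in Lst b) =
  (tag k == tag b) && perm_eq (codom (tagged k).1) (codom (hcB b)).
Proof.
rewrite /Lst mem_undup; apply/mapP/idP => [[s _ ->]|].
  by rewrite /= eqxx perm_codom.
case: k => m [h t] /= /andP [/eqP Em]; subst m => /perm_ex [s ->].
exists s; first by rewrite mem_enum.
congr existT; congr pair; apply/ffunP => i; rewrite ffunE.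
by case: (t i).
Qed.


Lemma Lst_lprime b k : k \in Lst b -> lprime (tagged k).1.
Proof.
rewrite memLst; case: k => m [h t] /= /andP [/eqP Em]; subst m => Hp.
by rewrite -bhs_cnt (cnt_perm Hp) cnt_hcB; exact: (valP (tagged b)).
Qed.

Lemma Lst_bhsOf b k : k \in Lst b -> bhsOf k = Some b.
Proof.
rewrite memLst; case: k => m [h t] /= /andP [/eqP Em]; subst m => Hp.
by rewrite -(bhsOf_cB b) /bhsOf /= (cnt_perm Hp).
Qed.

Lemma cB_Lst b b' : (cB b' \in Lst b) = (b' == b).
Proof.
apply/idP/eqP => [/Lst_bhsOf|->].
  by rewrite bhsOf_cB => -[].
by rewrite memLst /= eqxx perm_refl.
Qed.

Lemma Lst_act b s k : (actB s k \in Lst b) = (k \in Lst b).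
Proof.
rewrite !memLst; case: k => m [h t] /=.
by rewrite (permPl (perm_codom h _)).
Qed.

Lemma sum_ind (V : nmodType) (T : eqType) (L : seq T) x (c : V) :
  uniq L -> \sum_(k <- L) c *+ (k == x) = c *+ (x \in L).
Proof.
move=> uL; case: (boolP (x \in L)) => Hx.
  rewrite (bigD1_seq x) //= eqxx big1 ?addr0 // => k /negPf ->.
  by rewrite mulr0n.
rewrite big1_seq // => k /andP [_ Hk]; case: eqP => [E|]; last by rewrite mulr0n.
by rewrite -E Hk in Hx.
Qed.

Definition Orb (F : fieldType) (b : BHS) : {malg F[GBasis]} :=
  \sum_(k <- Lst b) << k >>.

Lemma OrbE (F : fieldType) b x : (Orb F b)@_x = (x \in Lst b)%:R.
Proof.
rewrite /Orb raddf_sum /=.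
under eq_bigr do rewrite mcoeffU.
by rewrite sum_ind // undup_uniq.
Qed.

Theorem corollary6p8 (F : fieldType) :
  exists f : {linear {malg F[GBasis]} -> {malg F[BHS]}},
    (forall p q, GammaLev p -> GammaLev q -> f p = f q -> p = q) /\
    (forall y : {malg F[BHS]}, exists p, GammaLev p /\ f p = y).
Proof.
exists (@fmap F); split.
  move=> p q [Sp Ip] [Sq Iq] E; apply/malgP => k.
  case: (boolP (lprime (tagged k).1)) => Hl.
    have [b [s ->]] := orbit_rep Hl.
    by rewrite (inv_coef Ip) (inv_coef Iq) -!fmapE E.
  rewrite !mcoeff_outdom //.
    by apply: contra Hl; apply: Sq.
  by apply: contra Hl; apply: Sp.
move=> y; exists (\sum_(b <- msupp y) y@_b *: Orb F b); split; first split.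
- move=> k; rewrite -mcoeff_neq0; apply: contraR => Hl.
  rewrite raddf_sum big1 // => b _ /=.
  rewrite mcoeffZ OrbE; case: (boolP (k \in Lst b)) => Hk; last by rewrite mulr0.
  by rewrite (Lst_lprime Hk) in Hl.
- apply: coef_inv => s k; rewrite !raddf_sum; apply: eq_bigr => b _ /=.
  by rewrite !mcoeffZ !OrbE Lst_act.
- apply/malgP => b'; rewrite fmapE raddf_sum /= -(mcoef_sumE y b').
  apply: eq_bigr => b _; by rewrite mcoeffZ OrbE cB_Lst mulr_natr eq_sym.
Qed.
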